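(* Let $\mu>0$, let $a\in\left(-\frac{2\mu}{9},0\right)\cup\left(0,\frac{4\mu}{9}\right)$ be real and $s_1\in\left[\frac{2\mu}{3},\infty\right)$. Define $$F(\tilde z;s_1,a)=\frac{H(\tilde z;s_1,a)}{\beta_1(a,s_1)},\quad H(\tilde z;s_1,a)=\frac{27a^2\tilde z\,(2s_1-3a)}{27a^3\tilde z-27a^2\tilde z\,s_1-(\tilde z-1)^2s_1^3},\quad \beta_1(a,s_1)=\frac{27a^2}{s_1^3}(3a-2s_1).$$ Then for all $|\tilde z|<1$, $$\frac{|\tilde z|}{(1+|\tilde z|)^2}\le\left|F(\tilde z;s_1,a)\right|\le\frac{|\tilde z|}{(1-|\tilde z|)^2}.$$ *)

(* Defs.v *)
From Stdlib Require Import Reals.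
From Coquelicot Require Import Coquelicot.
Open Scope R_scope.

Definition beta1 (a s1 : R) : R := 27 * a ^ 2 / s1 ^ 3 * (3 * a - 2 * s1).

Definition H (z : C) (s1 a : R) : C :=
  Cdiv (Cmult (RtoC (27 * a ^ 2 * (2 * s1 - 3 * a))) z)
       (Cminus (Cminus (Cmult (RtoC (27 * a ^ 3)) z)
                       (Cmult (RtoC (27 * a ^ 2 * s1)) z))
               (Cmult (Cmult (Cminus z 1) (Cminus z 1)) (RtoC (s1 ^ 3)))).

Definition F (z : C) (s1 a : R) : C := Cdiv (H z s1 a) (RtoC (beta1 a s1)).

(* Main.v *)
Require Import Defs.
From Stdlib Require Import Reals Lra Psatz.
From Coquelicot Require Import Coquelicot.
Open Scope R_scope.

Theorem corollary2 (mu a s1 : R) (z : C) :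
  0 < mu ->
  ((- (2 * mu / 9) < a /\ a < 0) \/ (0 < a /\ a < 4 * mu / 9)) ->
  2 * mu / 3 <= s1 ->
  Cmod z < 1 ->
  Cmod z / (1 + Cmod z) ^ 2 <= Cmod (F z s1 a) /\
  Cmod (F z s1 a) <= Cmod z / (1 - Cmod z) ^ 2.
Proof.
  intros Hmu Ha Hs Hz.
  assert (hs : 0 < s1) by lra.
  assert (hs3 : 0 < s1 ^ 3) by (apply pow_lt; lra).
  assert (ha : a <> 0) by lra.
  assert (h2 : 0 < 2 * s1 - 3 * a) by lra.
  assert (h3 : 0 < 3 * a + s1) by lra.
  set (c := 27 * a ^ 2 * (s1 - a) / s1 ^ 3).
  assert (hc0 : 0 <= c).
  { unfold c. apply Rmult_le_pos; [|left; apply Rinv_0_lt_compat; lra].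
    apply Rmult_le_pos; [|lra]. assert (0 < a^2) by nra. lra. }
  assert (hc4 : c <= 4).
  { unfold c. apply Rmult_le_reg_r with (s1 ^ 3); auto.
    unfold Rdiv. rewrite Rmult_assoc, Rinv_l by lra.
    assert (e : 4 * s1 ^ 3 - 27 * a ^ 2 * (s1 - a) = (3*a - 2*s1)^2 * (3*a+s1)) by ring.
    assert (0 <= (3*a - 2*s1)^2 * (3*a+s1)) by (apply Rmult_le_pos; nra).
    lra. }
  set (b := 2 - c).
  assert (hb : 0 <= 1 - b^2/4) by (unfold b; nra).
  set (k := sqrt (1 - b^2/4)).
  assert (hk : k * k = 1 - b^2/4) by (apply sqrt_sqrt; auto).
  set (w := (b/2, k) : C). set (w' := (b/2, - k) : C).
  assert (hw : Cmod w = 1).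
  { unfold Cmod. replace (fst w ^ 2 + snd w ^ 2) with 1 by (simpl; lra). apply sqrt_1. }
  assert (hw' : Cmod w' = 1).
  { unfold Cmod. replace (fst w' ^ 2 + snd w' ^ 2) with 1 by (simpl; lra). apply sqrt_1. }
  set (r := Cmod z).
  assert (hr0 : 0 <= r) by apply Cmod_ge_0.
  assert (hr1 : r < 1) by exact Hz.
  assert (lo : forall v : C, Cmod v = 1 -> 1 - r <= Cmod (z - v)).
  { intros v hv. assert (ev : v = (- (z - v) + z)%C) by ring.
    pose proof (Cmod_triangle (- (z - v)) z) as T. rewrite <- ev, Cmod_opp in T. unfold r. lra. }
  assert (up : forall v : C, Cmod v = 1 -> Cmod (z - v) <= 1 + r).
  { intros v hv. pose proof (Cmod_triangle z (- v)) as T. rewrite Cmod_opp in T.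
    unfold Cminus. unfold r. lra. }
  set (Q := ((z - w) * (z - w'))%C).
  assert (hQlo : (1 - r)^2 <= Cmod Q).
  { unfold Q. rewrite Cmod_mult. replace ((1-r)^2) with ((1-r)*(1-r)) by ring.
    apply Rmult_le_compat; try lra; auto.
    }
  assert (hQup : Cmod Q <= (1 + r)^2).
  { unfold Q. rewrite Cmod_mult. replace ((1+r)^2) with ((1+r)*(1+r)) by ring.
    apply Rmult_le_compat; try apply Cmod_ge_0; auto. }
  assert (hQpos : 0 < Cmod Q) by nra.
  assert (hQ0 : Q <> 0%C) by (intro e; rewrite e, Cmod_0 in hQpos; lra).
  assert (hD : (Cminus (Cminus (Cmult (RtoC (27 * a ^ 3)) z)
                       (Cmult (RtoC (27 * a ^ 2 * s1)) z))
               (Cmult (Cmult (Cminus z 1) (Cminus z 1)) (RtoC (s1 ^ 3))))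
             = Cmult (RtoC (- s1 ^ 3)) Q).
  { unfold Q, w, w'. destruct z as [x y].
    assert (ec : c * s1 ^ 3 = 27 * a ^ 2 * (s1 - a)).
    { unfold c. field. lra. }
    unfold Cminus, Cmult, Copp, Cplus, RtoC; simpl.
    pose proof (f_equal (fun t => t * x) ec) as ex.
    pose proof (f_equal (fun t => t * y) ec) as ey. simpl in ex, ey.
    f_equal.
    - transitivity (-(s1^3) * ((x-b/2)^2 - y^2 + k*k)); [ | ring].
      rewrite hk. unfold b. lra.
    - unfold b. lra. }
  assert (hDn : Cmult (RtoC (- s1 ^ 3)) Q <> 0%C).
  { intro e. apply (f_equal Cmod) in e. rewrite Cmod_mult, Cmod_R, Cmod_0 in e.
    rewrite Rabs_left in e by lra. nra. }
  assert (hbeta : beta1 a s1 <> 0).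
  { unfold beta1. intro e. apply Rmult_integral in e. destruct e as [e|e]; [|lra].
    unfold Rdiv in e. apply Rmult_integral in e. destruct e as [e|e].
    - nra. - apply Rinv_neq_0_compat in e; lra. }
  assert (hF : Cmod (F z s1 a) = r / Cmod Q).
  { unfold F, H. rewrite hD. rewrite Cmod_div.
    2:{ intro e. apply (f_equal fst) in e. simpl in e. lra. }
    rewrite Cmod_div by auto.
    rewrite !Cmod_mult, !Cmod_R. unfold beta1.
    rewrite (Rabs_left (- s1 ^ 3)) by lra.
    rewrite (Rabs_pos_eq (27 * a ^ 2 * (2 * s1 - 3 * a))) by nra.
    rewrite Rabs_left.
    2:{ assert (0 < a^2) by nra. assert (0 < 27 * a ^ 2 / s1 ^ 3).
        { apply Rdiv_lt_0_compat; lra. } nra. }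
    change (Cmod z) with r. field. repeat split; try lra; nra. }
  rewrite hF. change (Cmod z) with r. split.
  - unfold Rdiv. apply Rmult_le_compat_l; auto.
    apply Rinv_le_contravar; auto.
  - unfold Rdiv. apply Rmult_le_compat_l; auto.
    apply Rinv_le_contravar; auto.
    apply pow_lt; lra.
Qed.
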